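(* Suppose the description of $K$ contains a ball constraint, i.e. $g_m(x)=R^2-\sum_{i=1}^n x_i^2$ for some real $R$. Then for every integer $d\ge d_{\min}$, every feasible point $y=(y_\alpha)_{|\alpha|\le 2d}$ of $P_d$ satisfies $$\sqrt{\textstyle\sum_{|\alpha|\le 2d} y_\alpha^2}\;\le\;\sqrt{\binom{n+d}{n}}\;\sum_{k=0}^{d}R^{2k},$$ i.e. the feasible set of $P_d$ is contained in the Euclidean ball of that radius centered at the origin.
   Context: Polynomial optimization problem: minimize $f(x)=\sum_\alpha f_\alpha x^\alpha$ over $x\in\mathbb R^n$ subject to $g_i(x)=\sum_\alpha g_{i,\alpha}x^\alpha\ge 0$, $i=1,\dots,m$, with $f,g_i$ real polynomials; $x^\alpha=x_1^{\alpha_1}\cdots x_n^{\alpha_n}$, $|\alpha|=\sum_i\alpha_i$; $K=\{x: g_i(x)\ge0,\ i=1,\dots,m\}$. Set $g_0:=1$ and let $d_i$ be the smallest integer $\ge \deg(g_i)/2$, $i=0,\dots,m$; $d_{\min}:=\max_{i}d_i$ (and assume $\deg f\le 2d$). For $y=(y_\alpha)_{|\alpha|\le 2d}$ the localizing matrix is $M_{d-d_i}(g_iy):=\big(\sum_\gamma g_{i,\gamma}y_{\alpha+\beta+\gamma}\big)_{|\alpha|,|\beta|\le d-d_i}$, and $M_d(y):=M_d(g_0y)$. The primal problem $P_d$ is: $\inf_y \sum_\alpha f_\alpha y_\alpha$ subject to $y_0=1$ and $M_{d-d_i}(g_iy)\succeq 0$ for $i=0,1,\dots,m$ (real symmetric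 positive semidefiniteness). *)

(* Defs.v *)
From HB Require Import structures.
From mathcomp Require Import all_boot all_order all_algebra.
Set Implicit Arguments. Unset Strict Implicit. Unset Printing Implicit Defensive.
Import Order.TTheory GRing.Theory Num.Theory.
Local Open Scope ring_scope.

Definition expo (n : nat) := {ffun 'I_n -> nat}.
Definition expo0 n : expo n := [ffun => 0%N].
Definition expo_add n (a b : expo n) : expo n := [ffun i => (a i + b i)%N].
Definition expo_deg n (a : expo n) : nat := (\sum_(i < n) a i)%N.

Definition mono (n k : nat) :=
  {f : {ffun 'I_n -> 'I_k.+1} | (\sum_(i < n) (f i : nat) <= k)%N}.
Definition mono_exp n k (a : mono n k) : expo n := [ffun i => (val a i : nat)].

Definition mpoly (R : Type) (n : nat) := seq (R * expo n).
Definition mcoef (R : nzRingType) n (g : mpoly R n) (c : expo n) : R :=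
  \sum_(t <- g | t.2 == c) t.1.
Definition msupp (R : nzRingType) n (g : mpoly R n) : seq (expo n) :=
  [seq c <- undup [seq t.2 | t <- g] | mcoef g c != 0].
(* total degree (0 for the zero polynomial) *)
Definition mdeg (R : nzRingType) n (g : mpoly R n) : nat :=
  (\max_(c <- msupp g) expo_deg c)%N.
Definition hdeg (R : nzRingType) n (g : mpoly R n) : nat := uphalf (mdeg g).

(* the ball polynomial  r^2 - sum_i x_i^2 *)
Definition unit2 n (i : 'I_n) : expo n := [ffun j => if j == i then 2%N else 0%N].
Definition ball_poly (R : nzRingType) n (r : R) : mpoly R n :=
  (r ^+ 2, expo0 n) :: [seq (-1, unit2 i) | i <- enum 'I_n].

Definition psd (R : numDomainType) (T : finType) (M : T -> T -> R) : Prop :=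
  (forall a b, M a b = M b a) /\
  (forall v : T -> R, 0 <= \sum_(a : T) \sum_(b : T) v a * M a b * v b).

Definition loc_mx (R : nzRingType) n (k : nat) (g : mpoly R n) (y : expo n -> R)
  : mono n k -> mono n k -> R :=
  fun a b => \sum_(c <- msupp g)
      mcoef g c * y (expo_add (expo_add (mono_exp a) (mono_exp b)) c).
Definition mom_mx (R : nzRingType) n (k : nat) (y : expo n -> R)
  : mono n k -> mono n k -> R :=
  fun a b => y (expo_add (mono_exp a) (mono_exp b)).

(* d_min = max_{i=0..m} d_i, d_0 = 0 *)
Definition dmin (R : nzRingType) n m (gs : 'I_m -> mpoly R n) : nat :=
  (\max_(i < m) hdeg (gs i))%N.

(* feasibility for P_d (only the values y_alpha, |alpha| <= 2d, are involved) *)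
Definition feasible (R : numDomainType) n m (gs : 'I_m -> mpoly R n) (d : nat)
  (y : expo n -> R) : Prop :=
  y (expo0 n) = 1 /\ psd (@mom_mx R n d y) /\
  forall i : 'I_m, psd (@loc_mx R n (d - hdeg (gs i)) (gs i) y).

(* Main.v *)
Require Import Defs.
From HB Require Import structures.
From mathcomp Require Import all_boot all_order all_algebra.
From mathcomp Require Import zify ring lra.
Set Implicit Arguments. Unset Strict Implicit. Unset Printing Implicit Defensive.
Import Order.TTheory GRing.Theory Num.Theory.
Local Open Scope ring_scope.

Section Coef.
Variables (R : nzRingType) (n : nat).

Lemma mcoef_notin (g : mpoly R n) c : c \notin [seq t.2 | t <- g] -> mcoef g c = 0.
Proof.
move=> H; rewrite /mcoef big_seq_cond big1 // => t /andP[tg /eqP tc].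
by case/negP: H; rewrite -tc; apply/mapP; exists t.
Qed.

Lemma mem_msupp (g : mpoly R n) c : (c \in msupp g) = (mcoef g c != 0).
Proof.
rewrite /msupp mem_filter mem_undup andbC.
case H: (c \in [seq t.2 | t <- g]) => //=.
by rewrite mcoef_notin ?H ?eqxx.
Qed.

Lemma msupp_uniq (g : mpoly R n) : uniq (msupp g).
Proof. by rewrite /msupp filter_uniq // undup_uniq. Qed.

Lemma msupp_sum (g : mpoly R n) (h : expo n -> R) :
  \sum_(c <- msupp g) mcoef g c * h c = \sum_(t <- g) t.1 * h t.2.
Proof.
rewrite /msupp big_filter big_mkcond /=.
rewrite (eq_bigr (fun c => mcoef g c * h c)); last first.
  by move=> c _; case: ifP => // /negbFE/eqP ->; rewrite mul0r.
rewrite /mcoef.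
rewrite (eq_bigr (fun c => \sum_(t <- g | t.2 == c) t.1 * h t.2)); last first.
  by move=> c _; rewrite mulr_suml; apply: eq_bigr => t /eqP ->.
rewrite (exchange_big_dep xpredT) //=; apply: eq_big_seq => t tg.
rewrite (eq_bigl (fun c => c == t.2)); last by move=> c; rewrite eq_sym.
rewrite -big_filter filter_pred1_uniq ?undup_uniq ?big_seq1 //.
by rewrite mem_undup; apply/mapP; exists t.
Qed.

Lemma msupp_eq (g g' : mpoly R n) (h : expo n -> R) :
  (forall c, mcoef g c = mcoef g' c) ->
  \sum_(c <- msupp g) mcoef g c * h c = \sum_(c <- msupp g') mcoef g' c * h c.
Proof.
move=> E; rewrite (eq_bigr (fun c => mcoef g' c * h c)); last by move=> c _; rewrite E.
apply: perm_big; apply: uniq_perm; rewrite ?msupp_uniq // => c.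
by rewrite !mem_msupp E.
Qed.

End Coef.
Section Expo.
Variable n : nat.

Lemma expo_deg_ge (e : expo n) i : (e i <= expo_deg e)%N.
Proof. by rewrite /expo_deg (bigD1 i) //= leq_addr. Qed.

Lemma expo_deg_add (a b : expo n) : expo_deg (expo_add a b) = (expo_deg a + expo_deg b)%N.
Proof. by rewrite /expo_deg -big_split; apply: eq_bigr => i _; rewrite ffunE. Qed.

Lemma expo_addC (a b : expo n) : expo_add a b = expo_add b a.
Proof. by apply/ffunP => i; rewrite !ffunE addnC. Qed.

Lemma expo_add0 (a : expo n) : expo_add a (expo0 n) = a.
Proof. by apply/ffunP => i; rewrite !ffunE addn0. Qed.

Lemma expo_deg0 : expo_deg (expo0 n) = 0%N.
Proof. by rewrite /expo_deg big1 // => i _; rewrite ffunE. Qed.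

Lemma mono0_proof k :
  (\sum_(i < n) ((([ffun => ord0] : {ffun 'I_n -> 'I_k.+1}) i : nat)) <= k)%N.
Proof. by rewrite big1 // => i _; rewrite ffunE. Qed.

Definition mono_of k (e : expo n) : mono n k :=
  @insubd _ _ (mono n k) (exist _ [ffun => ord0] (mono0_proof k)) ([ffun i => inord (e i)] : {ffun 'I_n -> 'I_k.+1}).

Lemma mono_ofK k (e : expo n) : (expo_deg e <= k)%N -> mono_exp (mono_of k e) = e.
Proof.
move=> H.
have Ei : forall i, ((inord (e i) : 'I_k.+1) : nat) = e i.
  by move=> i; rewrite inordK // ltnS (leq_trans (expo_deg_ge e i)).
rewrite /mono_of /mono_exp insubdK; first by apply/ffunP => i; rewrite !ffunE Ei.
rewrite unfold_in /=.
by rewrite (eq_bigr (fun i => e i)) // => i _; rewrite ffunE Ei.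
Qed.

Lemma mono_exp_inj k : injective (@mono_exp n k).
Proof.
move=> a b E; apply: val_inj; apply/ffunP => i; apply: val_inj.
by have := congr1 (fun f : expo n => f i) E; rewrite /mono_exp !ffunE.
Qed.

Lemma mono_deg k (a : mono n k) : (expo_deg (mono_exp a) <= k)%N.
Proof.
rewrite /expo_deg (eq_bigr (fun i => (val a i : nat))); first exact: (valP a).
by move=> i _; rewrite ffunE.
Qed.

Definition sub1 (e : expo n) i : expo n := [ffun j => if j == i then (e j).-1 else e j].

Lemma sub1_deg (e : expo n) i : (0 < e i)%N -> expo_deg (sub1 e i) = (expo_deg e).-1.
Proof.
move=> H; rewrite /expo_deg (bigD1 i) //= [in RHS](bigD1 i) //= ffunE eqxx.
rewrite (eq_bigr (fun j => e j)); last by move=> j /negbTE ji; rewrite ffunE ji.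
by move: H; case: (e i) => // k _; rewrite addSn.
Qed.

Lemma sub1_add (e : expo n) i : (0 < e i)%N ->
  expo_add (expo_add (sub1 e i) (sub1 e i)) (unit2 i) = expo_add e e.
Proof.
move=> H; apply/ffunP => j; rewrite !ffunE.
case: (eqVneq j i) => [->|_]; lia.
Qed.

Lemma sub1_inj (e f : expo n) i : (0 < e i)%N -> (0 < f i)%N -> sub1 e i = sub1 f i -> e = f.
Proof.
move=> He Hf E; apply/ffunP => j; have := congr1 (fun g : expo n => g j) E.
rewrite !ffunE; case: (eqVneq j i) => [->|_] //; rewrite ?eqxx. move: He Hf; case: (e i) => // ?; case: (f i) => // ? _ _ /=; lia.
Qed.

Lemma deg_pos (e : expo n) : (0 < expo_deg e)%N -> exists i, (0 < e i)%N.
Proof.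
move=> H; case: (boolP [exists i, 0 < e i]%N) => [/existsP//|]; rewrite negb_exists => /forallP A.
move: H; rewrite /expo_deg big1 // => i _; have := A i; lia.
Qed.

Lemma split_ex (e : expo n) k : (k <= expo_deg e)%N ->
  exists a : {ffun 'I_n -> nat}, (forall i, a i <= e i)%N /\ expo_deg a = k.
Proof.
elim: k => [|k IH] H.
  by exists (expo0 n); split; [move=> i; rewrite ffunE | exact: expo_deg0].
have [a [ale ad]] := IH (ltnW H).
have : [exists i, a i < e i]%N.
  case: (boolP [exists i, a i < e i]%N) => //; rewrite negb_exists => /forallP A.
  have : (expo_deg e <= expo_deg a)%N by apply: leq_sum => i _; have := A i; lia.
  lia.
case/existsP => i ai.
exists [ffun j => a j + (j == i)]%N; split.
  move=> j; rewrite ffunE; case: (eqVneq j i) => [->|_] /=; have := ale j; lia.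
rewrite /expo_deg (bigD1 i) //= ffunE eqxx.
rewrite (eq_bigr (fun j => a j)); last by move=> j /negbTE ji; rewrite ffunE ji addn0.
move: ad; rewrite /expo_deg (bigD1 i) //=; lia.
Qed.

Lemma split_exb (e : expo n) d : exists a : {ffun 'I_n -> nat},
  [forall i, a i <= e i]%N && (expo_deg a == minn (expo_deg e) d).
Proof.
have [a [H1 H2]] := split_ex (geq_minl (expo_deg e) d).
by exists a; rewrite H2 eqxx andbT; apply/forallP.
Qed.

Definition split1 (e : expo n) d : expo n :=
  xchoose (split_exb e d).

Definition expo_sub (e a : expo n) : expo n := [ffun i => e i - a i]%N.

Lemma split1P (e : expo n) d :
  expo_add (split1 e d) (expo_sub e (split1 e d)) = e /\
  expo_deg (split1 e d) = minn (expo_deg e) d /\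
  expo_deg (expo_sub e (split1 e d)) = (expo_deg e - minn (expo_deg e) d)%N.
Proof.
have /andP[/forallP le /eqP dg] := xchooseP (split_exb e d).
rewrite -/(split1 e d) in le dg.
have E : expo_add (split1 e d) (expo_sub e (split1 e d)) = e.
  by apply/ffunP => i; rewrite !ffunE subnKC.
split=> //; split=> //.
have := expo_deg_add (split1 e d) (expo_sub e (split1 e d)); rewrite E dg; lia.
Qed.

End Expo.
Section Mat.
Variable R : realFieldType.

Lemma sum_comb (T : finType) (f : T -> R) x y s t :
  \sum_b f b * ((b == x)%:R * s + (b == y)%:R * t) = f x * s + f y * t.
Proof.
rewrite (eq_bigr (fun b => f b * ((b == x)%:R * s) + f b * ((b == y)%:R * t))); last first.
  by move=> b _; rewrite mulrDr.
rewrite big_split /=; congr (_ + _).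
  rewrite (bigD1 x) //= eqxx mul1r big1 ?addr0 // => b /negbTE ->.
  by rewrite mul0r mulr0.
rewrite (bigD1 y) //= eqxx mul1r big1 ?addr0 // => b /negbTE ->.
by rewrite mul0r mulr0.
Qed.

Lemma psd_form (T : finType) (M : T -> T -> R) x y s t :
  \sum_a \sum_b ((a == x)%:R * s + (a == y)%:R * t) * M a b *
                ((b == x)%:R * s + (b == y)%:R * t)
  = s * (s * M x x + t * M x y) + t * (s * M y x + t * M y y).
Proof.
rewrite (eq_bigr (fun a => (\sum_b M a b * ((b == x)%:R * s + (b == y)%:R * t)) *
   ((a == x)%:R * s + (a == y)%:R * t))); last first.
  move=> a _; rewrite mulr_suml; apply: eq_bigr => b _; ring.
rewrite (eq_bigr (fun a => (M a x * s + M a y * t) *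
   ((a == x)%:R * s + (a == y)%:R * t))); last by move=> a _; rewrite sum_comb.
rewrite sum_comb; ring.
Qed.

Lemma psd_diag (T : finType) (M : T -> T -> R) x : psd M -> 0 <= M x x.
Proof.
case=> _ /(_ (fun z => (z == x)%:R * 1 + (z == x)%:R * 0)).
rewrite psd_form; nra.
Qed.

Lemma psd_cs (T : finType) (M : T -> T -> R) x y : psd M -> M x y ^+ 2 <= M x x * M y y.
Proof.
move=> P; have Hx := psd_diag x P; have Hy := psd_diag y P.
case: P => S Q.
have Q' : forall s t, 0 <= s * (s * M x x + t * M x y) + t * (s * M x y + t * M y y).
  by move=> s t; have := Q (fun z => (z == x)%:R * s + (z == y)%:R * t); rewrite psd_form S.
have [Hx0|Hxp] := eqVneq (M x x) 0.
  have := Q' (M y y + 1) (- M x y); rewrite Hx0; nra.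
have Hxp' : 0 < M x x by rewrite lt_def Hxp Hx.
have := Q' (M x y) (- M x x); nra.
Qed.

Lemma psd_frob (T : finType) (M : T -> T -> R) : psd M ->
  \sum_a \sum_b M a b ^+ 2 <= (\sum_a M a a) ^+ 2.
Proof.
move=> P; rewrite expr2 big_distrlr /=.
apply: ler_sum => a _; apply: ler_sum => b _; exact: psd_cs.
Qed.

Lemma sum_inj_le (I J : finType) (P : pred I) (Q : pred J) (f : I -> J)
  (F : I -> R) (G : J -> R) :
  {in P &, injective f} -> (forall i, P i -> Q (f i)) ->
  (forall i, P i -> F i = G (f i)) -> (forall j, Q j -> 0 <= G j) ->
  \sum_(i | P i) F i <= \sum_(j | Q j) G j.
Proof.
move=> inj PQ FG G0.
rewrite (eq_bigr (fun i => G (f i))) //.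
have -> : \sum_(i | P i) G (f i) = \sum_(j in f @: [set i | P i]) G j.
  rewrite big_imset /=; first by apply: eq_bigl => i; rewrite inE.
  by move=> i1 i2; rewrite !inE; apply: inj.
rewrite [X in _ <= X](bigID (mem (f @: [set i | P i]))) /=.
have -> : \sum_(j | Q j && (j \in f @: [set i | P i])) G j =
          \sum_(j in f @: [set i | P i]) G j.
  apply: eq_bigl => j; case: (boolP (j \in _)) => [/imsetP[i]|]; last by rewrite andbF.
  by rewrite inE => Pi -> /=; rewrite PQ.
rewrite lerDl; apply: sumr_ge0 => j /andP[Qj _]; exact: G0.
Qed.

End Mat.

Definition ind n (i : 'I_n) : expo n := [ffun j => nat_of_bool (j == i)].

Lemma ind_deg n (i : 'I_n) : expo_deg (ind i) = 1%N.
Proof.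
rewrite /expo_deg (bigD1 i) //= ffunE eqxx big1 // => j /negbTE ji.
by rewrite ffunE ji.
Qed.

Lemma unit2_deg n (i : 'I_n) : expo_deg (unit2 i) = 2%N.
Proof.
rewrite /expo_deg (bigD1 i) //= ffunE eqxx big1 // => j /negbTE ji.
by rewrite ffunE ji.
Qed.

Lemma add_ind n (e : expo n) i :
  expo_add (expo_add e e) (unit2 i) =
  expo_add (expo_add e (ind i)) (expo_add e (ind i)).
Proof.
apply/ffunP => j; rewrite !ffunE; case: (j == i) => /=; lia.
Qed.

Theorem lemma3 (R : rcfType) (n m : nat) (gs : 'I_m -> mpoly R n) (j : 'I_m)
  (r : R) (hball : forall c, mcoef (gs j) c = mcoef (ball_poly n r) c)
  (d : nat) (hd : (dmin gs <= d)%N) (y : expo n -> R)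
  (hy : feasible gs d y) :
  Num.sqrt (\sum_(a : mono n (2 * d)) y (mono_exp a) ^+ 2)
  <= Num.sqrt ('C(n + d, n))%:R * \sum_(k < d.+1) r ^+ (2 * k).
Proof.
case: hy => y0 [PM PL].
have hh : (hdeg (gs j) <= 1)%N.
  rewrite /hdeg.
  suff : (mdeg (gs j) <= 2)%N by case: (mdeg (gs j)) => [|[|[|]]].
  apply/bigmax_leqP_seq => c; rewrite mem_msupp hball => nz _.
  have : c \in [seq t.2 | t <- ball_poly n r].
    case: (boolP (c \in _)) => // /mcoef_notin E.
    by rewrite E eqxx in nz.
  rewrite /ball_poly /= -map_comp inE => /orP[/eqP ->|/mapP[i _ ->]] /=.
    by rewrite expo_deg0.
  by rewrite unit2_deg.
have Lk : forall e : expo n, (expo_deg e < d)%N ->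
    \sum_i y (expo_add (expo_add e e) (unit2 i)) <= r ^+ 2 * y (expo_add e e).
  move=> e he.
  have := psd_diag (mono_of (d - hdeg (gs j)) e) (PL j).
  rewrite /loc_mx mono_ofK; last by move: (expo_deg e) (hdeg (gs j)) he hh => a b; lia.
  rewrite (msupp_eq _ hball) msupp_sum /ball_poly big_cons big_map big_enum /= expo_add0.
  rewrite (eq_bigr (fun i => - y (expo_add (expo_add e e) (unit2 i)))); last first.
    by move=> i _; rewrite mulN1r.
  by rewrite sumrN subr_ge0.
have Md : forall e : expo n, (expo_deg e <= d)%N -> 0 <= y (expo_add e e).
  by move=> e he; have := psd_diag (mono_of d e) PM; rewrite /mom_mx mono_ofK.
pose T k := \sum_(a : mono n d | (expo_deg (mono_exp a) <= k)%N)
   y (expo_add (mono_exp a) (mono_exp a)).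
have T0 : T 0%N = 1.
  rewrite /T (bigD1 (mono_of d (expo0 n))) /=; last by rewrite mono_ofK expo_deg0.
  rewrite mono_ofK ?expo_deg0 // expo_add0 y0 big1 ?addr0 // => a /andP[ha na].
  exfalso; move/negP: na; apply; apply/eqP; apply: mono_exp_inj.
  rewrite mono_ofK ?expo_deg0 //; apply/ffunP => i; have := expo_deg_ge (mono_exp a) i.
  rewrite [expo0 n i]ffunE; move: ha; move: (expo_deg _) (mono_exp a i) => u v; lia.
have Tge : forall k, 0 <= T k.
  by move=> k; apply: sumr_ge0 => a _; apply: Md; apply: mono_deg.
have Tstep : forall k, (k < d)%N -> T k.+1 <= 1 + r ^+ 2 * T k.
  move=> k hk; rewrite /T (bigID (fun a : mono n d => (expo_deg (mono_exp a) <= 0)%N)) /=.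
  have -> : \sum_(a : mono n d | (expo_deg (mono_exp a) <= k.+1)%N &&
      (expo_deg (mono_exp a) <= 0)%N) y (expo_add (mono_exp a) (mono_exp a)) = T 0%N.
    by apply: eq_bigl => a; rewrite leqn0; case: eqP => [->|]; rewrite ?andbF.
  rewrite T0 lerD2l.
  case: (pickP (fun _ : 'I_n => true)) => [i0 _|none]; last first.
    rewrite big1; first by apply: mulr_ge0; [exact: sqr_ge0|exact: Tge].
    move=> a /andP[_ ha].
    rewrite -ltnNge in ha; have [i _] := deg_pos ha.
    by have := none i.
  pose ip (e : expo n) := odflt i0 [pick i | (0 < e i)%N].
  have ipP : forall e, (0 < expo_deg e)%N -> (0 < e (ip e))%N.
    move=> e /deg_pos [i hi]; rewrite /ip; case: pickP => [i' //|/(_ i)].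
    by rewrite hi.
  apply: (@le_trans _ _ (\sum_(p : mono n d * 'I_n | (expo_deg (mono_exp p.1) <= k)%N)
     y (expo_add (expo_add (mono_exp p.1) (mono_exp p.1)) (unit2 p.2)))).
    apply: (sum_inj_le (f := fun a => (mono_of d (sub1 (mono_exp a) (ip (mono_exp a))),
                                        ip (mono_exp a)))).
    - move=> a1 a2; rewrite !unfold_in /= => /andP[h1 h1'] /andP[h2 h2'] [E1 E2].
      have p1 : (0 < mono_exp a1 (ip (mono_exp a1)))%N by apply: ipP; rewrite ltnNge.
      have p2 : (0 < mono_exp a2 (ip (mono_exp a2)))%N by apply: ipP; rewrite ltnNge.
      apply: mono_exp_inj; apply: (sub1_inj (i := ip (mono_exp a1))) => //.
        by rewrite E2.
      have := congr1 (@mono_exp n d) E1; rewrite E2 !mono_ofK //.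
        by rewrite sub1_deg //; lia.
      by rewrite sub1_deg -?E2 //; lia.
    - move=> a /andP[h1 h2] /=; have p1 : (0 < mono_exp a (ip (mono_exp a)))%N by apply: ipP; rewrite ltnNge.
      by rewrite mono_ofK sub1_deg //; lia.
    - move=> a /andP[h1 h2] /=; have p1 : (0 < mono_exp a (ip (mono_exp a)))%N by apply: ipP; rewrite ltnNge.
      by rewrite mono_ofK ?sub1_add // sub1_deg //; lia.
    - move=> [a i] /= ha; rewrite add_ind; apply: Md.
      by rewrite expo_deg_add ind_deg; lia.
  rewrite (eq_bigl (fun p : mono n d * 'I_n => (expo_deg (mono_exp p.1) <= k)%N && xpredT p.2));
    last by move=> p; rewrite andbT.
  rewrite -(pair_big (fun a : mono n d => (expo_deg (mono_exp a) <= k)%N) xpredT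
     (fun a i => y (expo_add (expo_add (mono_exp a) (mono_exp a)) (unit2 i)))) /=.
  rewrite mulr_sumr; apply: ler_sum => a ha; apply: Lk; lia.
have Tb : forall k, (k <= d)%N -> T k <= \sum_(i < k.+1) r ^+ (2 * i).
  elim=> [|k IH] hk; first by rewrite T0 big_ord1 muln0 expr0.
  apply: (le_trans (Tstep k hk)); rewrite big_ord_recl muln0 expr0 lerD2l.
  apply: (le_trans (ler_wpM2l (sqr_ge0 r) (IH (ltnW hk)))).
  rewrite mulr_sumr; apply: ler_sum => i _; rewrite -exprD /=.
  by rewrite /bump /= mulnDr addnC.
have Tfull : \sum_(a : mono n d) @mom_mx R n d y a a = T d.
  by apply: eq_bigl => a; rewrite mono_deg.
have Frob : \sum_(a : mono n (2 * d)) y (mono_exp a) ^+ 2 <=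
            \sum_(p : mono n d * mono n d) @mom_mx R n d y p.1 p.2 ^+ 2.
  apply: (sum_inj_le (P := xpredT) (Q := xpredT)
    (f := fun a => (mono_of d (split1 (mono_exp a) d),
                    mono_of d (expo_sub (mono_exp a) (split1 (mono_exp a) d))))).
  - move=> a1 a2 _ _ [E1 E2]; apply: mono_exp_inj.
    have [A1 [B1 C1]] := split1P (mono_exp a1) d.
    have [A2 [B2 C2]] := split1P (mono_exp a2) d.
    have D1 := mono_deg a1; have D2 := mono_deg a2.
    have := congr1 (@mono_exp n d) E1; rewrite !mono_ofK ?B1 ?B2; try lia.
    have := congr1 (@mono_exp n d) E2; rewrite !mono_ofK ?C1 ?C2; try lia.
    by move=> F1 F2; rewrite -A1 -A2 F1 F2.
  - by [].
  - move=> a _ /=; rewrite /mom_mx.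
    have [A1 [B1 C1]] := split1P (mono_exp a) d.
    have D1 := mono_deg a.
    rewrite !mono_ofK ?B1 ?C1 ?A1 //; lia.
  - by move=> p _; apply: sqr_ge0.
rewrite -(pair_bigA _ (fun a b => @mom_mx R n d y a b ^+ 2)) /= in Frob.
set S := \sum_(k < d.+1) r ^+ (2 * k).
have S0 : 0 <= S by apply: sumr_ge0 => k _; rewrite exprM; apply: exprn_ge0; apply: sqr_ge0.
have Td : \sum_(a : mono n d) @mom_mx R n d y a a <= S by rewrite Tfull; apply: Tb.
have Tg : 0 <= \sum_(a : mono n d) @mom_mx R n d y a a by rewrite Tfull.
have H2 : \sum_(a : mono n (2 * d)) y (mono_exp a) ^+ 2 <= S ^+ 2.
  apply: (le_trans Frob); apply: (le_trans (psd_frob PM)).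
  by rewrite !expr2; apply: ler_pM.
apply: (le_trans (ler_wsqrtr H2)); rewrite sqrtr_sqr ger0_norm //.
apply: ler_peMl => //; rewrite -[X in X <= _]sqrtr1; apply: ler_wsqrtr.
by rewrite ler1n bin_gt0 leq_addr.
Qed.
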